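(* Let $q\ge1$, $L\ge2$, $m=q\frac{L-1}{L}$, and $f\in C^1(\mathbb{R}^n,\mathbb{R})$. Let $w_{1,t},\dots,w_{L,t}\in\mathbb{R}^n$ solve the $L_p$ steepest flow with decoupled weight decay of unit strength $$dw_{i,t}=-\operatorname{sign}(\nabla_{w_i}F(w_t))\odot|\nabla_{w_i}F(w_t)|^{q-1}dt-w_{i,t}\,dt,\qquad F(w)=f\left(\textstyle\prod_iw_i\right),$$ from a balanced initialization ($|w_{i,0}|^q=|w_{j,0}|^q$ for all $i,j$). Let $R$ be separable with $\nabla^2_xR(x)=\operatorname{diag}\left(\frac{1}{L|x_i|^m}\right)$. Then $x_t=\prod_iw_{i,t}$ satisfies $$d\nabla_xR(x_t)=-\operatorname{sign}(\nabla_xf(x_t))\odot|\nabla_xf(x_t)|^{q-1}dt-\nabla_xM_{\mathrm{reg}}(x_t)\,dt,$$ where the on-manifold regularizer $M_{\mathrm{reg}}$ is (up to an additive constant): (a) if $m\neq2$, $M_{\mathrm{reg}}(x)=\frac{L}{L(2-q)+q}\sum_{i\in[n]}|x_i|^{2-q\frac{L-1}{L}}$; (b) if $m=2$, $M_{\mathrm{reg}}(x)=\sum_{i\in[n]}\log(|x_i|)$.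
   Context: All operations are entrywise, $q$ is dual to $p$ ($1/p+1/q=1$). For a separable regularizer $h(x)=\sum_ih_i(x_i)$ and a separable mirror map $R$, the on-manifold regularizer is $M_{\mathrm{reg}}(x)=\sum_{i\in[n]}\int^{x_i}\partial_i^2R_i(s)\,\partial_ih_i(s)\,ds$; decoupled weight decay on the $w_i$ corresponds in $x$ to $\partial_ih_i(x_i)=Lx_i$. *)

(* Defs.v *)
From HB Require Import structures.
From mathcomp Require Import all_boot all_order all_algebra.
From mathcomp Require Import all_classical all_reals all_analysis.
Set Implicit Arguments. Unset Strict Implicit. Unset Printing Implicit Defensive.
Import Order.TTheory GRing.Theory Num.Theory.
Import numFieldNormedType.Exports.
Local Open Scope ring_scope.

(* partial derivative d g / d x_{i k} of g : 'M_(a,b) -> R at x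
   (for a function on 'rV_n = 'M_(1,n) use i = 0) *)
Definition partial (R : realType) (a b : nat) (g : 'M[R]_(a, b) -> R)
  (x : 'M[R]_(a, b)) (i : 'I_a) (k : 'I_b) : R :=
  derive g x (delta_mx i k).

Definition C1 (R : realType) (n : nat) (f : 'rV[R]_n -> R) : Prop :=
  (forall x, differentiable f x) /\
  (forall k : 'I_n, continuous (fun x => partial f x 0 k)).

Definition prodw (R : realType) (L n : nat) (w : 'M[R]_(L, n)) : 'rV[R]_n :=
  \row_k \prod_(i < L) w i k.

Definition Fw (R : realType) (L n : nat) (f : 'rV[R]_n -> R)
  (w : 'M[R]_(L, n)) : R := f (prodw w).

Definition sgpow (R : realType) (q g : R) : R := Num.sg g * (`|g| `^ (q - 1)).

Definition mexp (R : realType) (q : R) (L : nat) : R :=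
  q * (L%:R - 1) / L%:R.

Definition Mreg (R : realType) (q : R) (L n : nat) (x : 'rV[R]_n) : R :=
  if mexp q L != 2 then
    L%:R / (L%:R * (2 - q) + q) * \sum_(k < n) `|x 0 k| `^ (2 - mexp q L)
  else \sum_(k < n) ln `|x 0 k|.

(* Main.v *)
Require Import Defs.
From HB Require Import structures.
From mathcomp Require Import all_boot all_order all_algebra.
From mathcomp Require Import all_classical all_reals all_analysis.
From mathcomp Require Import lra ring.
Import Order.TTheory GRing.Theory Num.Theory.
Import numFieldNormedType.Exports.
Local Open Scope classical_set_scope.
Local Open Scope ring_scope.

Lemma derive_line (R : realType) (a b : nat) (F : 'M[R]_(a, b) -> R) x v :
  derive F x v = derive (fun h : R => F (h *: v + x)) 0 1.
Proof.
rewrite /derive.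
have -> : (fun h : R => h^-1 *: ((F \o shift x) (h *: v) - F x)) =
  (fun h : R => h^-1 *: (((fun h0 : R => F (h0 *: v + x)) \o shift 0) (h *: 1)
     - (fun h0 : R => F (h0 *: v + x)) 0)).
  apply: funext => h /=.
  by rewrite /shift scale0r add0r addr0 [h *: 1]mulr1.
by [].
Qed.
Lemma partial_Fw (R : realType) (L n : nat) (f : 'rV[R]_n -> R) (W : 'M[R]_(L, n)) i k :
  differentiable f (prodw W) ->
  partial (Fw f) W i k = partial f (prodw W) 0 k * \prod_(j < L | j != i) W j k.
Proof.
move=> df; rewrite /partial derive_line.
set c := \prod_(j < L | j != i) W j k.
have E : (fun h : R => Fw f (h *: delta_mx i k + W)) =
         (fun h : R => f (h *: (c *: delta_mx 0 k) + prodw W)).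
  apply: funext => h; rewrite /Fw; congr f.
  apply/rowP => j; rewrite /prodw !mxE.
  rewrite (bigD1 i) //= [X in _ = _ + X](bigD1 i) //= !mxE eqxx /=.
  have -> : \prod_(l < L | l != i) (h *: delta_mx i k + W) l j = \prod_(l < L | l != i) W l j.
    by apply: eq_bigr => l li; rewrite !mxE (negbTE li) /= mulr0 add0r.
  have [->|jk] := eqVneq j k.
    by rewrite /c /= mulr1n !mulr1 mulrDl.
  by rewrite /= mulr0n !mulr0 !add0r.
rewrite E -derive_line (deriveE _ df) linearZ /= -deriveE //.
by rewrite mulrC.
Qed.
Lemma is_derive_abspow (R : realType) (p y : R) : y != 0 ->
  is_derive y 1 (fun z : R => `|z| `^ p) (p * `|y| `^ (p - 1) * Num.sg y).
Proof.
move=> y0; have [yn|yp] := ltP y 0.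
  have H : is_derive y 1 ((@powR R ^~ p) \o -%R) (p * (- y) `^ (p - 1) * -1).
    apply: is_derive1_comp; first by apply: is_derive1_powR; lra.
  rewrite ltr0_norm // ltr0_sg //.
  apply: near_eq_is_derive H.
  near=> z; rewrite /= ltr0_norm //; near: z; exact: lt_nbhsl.
have yp' : 0 < y by rewrite lt_neqAle eq_sym y0.
have H := @is_derive1_powR R p y yp'.
rewrite gtr0_norm // gtr0_sg // mulr1.
apply: near_eq_is_derive H.
near=> z; rewrite gtr0_norm //; near: z; exact: lt_nbhsr.
Unshelve. all: by end_near. Qed.
Lemma dini (R : realType) (a b : R) (phi : R -> R) :
  a < b -> phi a <= 0 ->
  (forall s, a <= s < b -> forall e, 0 < e -> exists2 d, 0 < d &
      forall h, 0 < h < d -> phi (s + h) < phi s + e) ->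
  (forall s, a < s <= b -> forall e, 0 < e -> exists2 d, 0 < d &
      forall h, 0 < h < d -> phi s - e < phi (s - h)) ->
  (forall s, a < s < b -> 0 < phi s -> forall e, 0 < e -> exists2 d, 0 < d &
      forall h, 0 < h < d -> phi (s + h) <= phi s + e * h) ->
  phi b <= 0.
Proof.
move=> ab pa RC LC D.
suff H : forall e, 0 < e -> phi b <= e * (b - a + 1).
  rewrite leNgt; apply/negP => pb.
  have c0 : 0 < b - a + 1 by lra.
  have := H (phi b / (2 * (b - a + 1))).
  rewrite divr_gt0 // ?mulr_gt0 // => /(_ isT).
  have -> : phi b / (2 * (b - a + 1)) * (b - a + 1) = phi b / 2.
    by field; rewrite gt_eqF.
  lra.
move=> e e0.
pose B r := e * (r - a) + e.
have BD : forall r h, B (r + h) = B r + e * h.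
  by move=> r h; rewrite /B; ring.
pose S := [set s | a <= s <= b /\ forall r, a <= r <= s -> phi r <= B r].
have Sa : S a.
  split; first by rewrite lexx ltW.
  move=> r /andP[ar ra]; have -> : r = a by apply/eqP; rewrite eq_le ar ra.
  by rewrite /B subrr mulr0 add0r; lra.
have hsup : has_sup S.
  split; first by exists a.
  by exists b => s [/andP[_ ->]].
set u := sup S.
have au : a <= u by apply: sup_upper_bound.
have ub : u <= b by apply: ge_sup; [exists a | move=> s [/andP[_ ->]]].
have C1 : forall r, a <= r < u -> phi r <= B r.
  move=> r /andP[ar ru].
  have ur0 : 0 < u - r by rewrite subr_gt0.
  have [s [_ Hs] rs] := sup_adherent ur0 hsup.
  apply: Hs; rewrite ar /=; rewrite -/u in rs; lra.
have C2 : phi u <= B u.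
  have [ua|ua] := eqVneq u a.
    by rewrite ua /B subrr mulr0 add0r; lra.
  have au' : a < u by rewrite lt_neqAle eq_sym ua au.
  rewrite leNgt; apply/negP => hu.
  have auB : a < u <= b by rewrite au' ub.
  have he : 0 < (phi u - B u) / 2 by rewrite divr_gt0 //; lra.
  have [d d0 Hd] := LC u auB _ he.
  set m := Num.min d (u - a).
  have m1 : m <= d by rewrite ge_min lexx.
  have m2 : m <= u - a by rewrite ge_min lexx orbT.
  have m0 : 0 < m by rewrite lt_min d0 subr_gt0 au'.
  have h1 : 0 < m / 2 < d by apply/andP; split; lra.
  have := Hd _ h1.
  have := C1 (u - m / 2) ltac:(apply/andP; split; lra).
  rewrite /B.
  have : 0 < e * (m / 2) by rewrite mulr_gt0 //; lra.
  rewrite /B in hu.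
  have -> : e * (u - m / 2 - a) + e = e * (u - a) + e - e * (m / 2) by ring.
  lra.
have C3 : u = b.
  apply/eqP; rewrite eq_le ub /=; rewrite leNgt; apply/negP => ulb.
  have [d d0 Hd] : exists2 d, 0 < d & forall h, 0 < h < d -> phi (u + h) <= B (u + h).
    have [pu|pu] := leP (phi u) 0.
      have [d d0 Hd] := RC u ltac:(by rewrite au ulb) e e0.
      exists d => // h hd; have := Hd h hd; rewrite /B.
      have : 0 <= e * (u + h - a) by rewrite mulr_ge0 //; lra.
      lra.
    have au' : a < u by rewrite lt_neqAle au andbT; apply/eqP => ua; rewrite -ua in pu; lra.
    have [d d0 Hd] := D u ltac:(by rewrite au' ulb) pu e e0.
    by exists d => // h hd; rewrite BD; have := Hd h hd; lra.
  set m := Num.min d (b - u).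
  have m1 : m <= d by rewrite ge_min lexx.
  have m2 : m <= b - u by rewrite ge_min lexx orbT.
  have m0 : 0 < m by rewrite lt_min d0 subr_gt0 ulb.
  have Ss : S (u + m / 2).
    split; first by apply/andP; split; lra.
    move=> r /andP[ar rs].
    have [rlu|ulr] := ltP r u; first by apply: C1; rewrite ar rlu.
    have [ru|ru] := eqVneq r u; first by rewrite ru.
    have -> : r = u + (r - u) by ring.
    apply: Hd; have : u < r by rewrite lt_neqAle eq_sym ru ulr.
    move=> ?; apply/andP; split; lra.
  have := sup_upper_bound hsup Ss; rewrite -/u; lra.
by rewrite -C3; apply: le_trans C2 _; rewrite /B C3; lra.
Qed.
Lemma is_derive_shift_abspow (R : realType) (p a : R) : a != 0 ->
  is_derive (0:R) 1 (fun h : R => `|h + a| `^ p) (p * `|a| `^ (p - 1) * Num.sg a).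
Proof.
move=> a0.
have H : is_derive (0:R) 1 ((fun z : R => `|z| `^ p) \o (fun h : R => h + a))
           (p * `|a| `^ (p - 1) * Num.sg a * 1).
  apply: is_derive1_comp; first by rewrite add0r; exact: is_derive_abspow.
  have H1 : is_derive (0:R) 1 (id \+ cst a) (1 + 0) by apply: is_deriveD.
  by rewrite addr0 in H1.
by rewrite mulr1 in H.
Qed.

Lemma is_derive_shift_lnabs (R : realType) (a : R) : a != 0 ->
  is_derive (0:R) 1 (fun h : R => ln `|h + a|) a^-1.
Proof.
move=> a0.
have H : is_derive (0:R) 1 (@ln R \o (fun h : R => `|h + a| `^ 1))
           (`|a|^-1 * (1 * `|a| `^ (1 - 1) * Num.sg a)).
  apply: is_derive1_comp; last exact: is_derive_shift_abspow.
  rewrite add0r powRr1 //; apply: is_derive1_ln; by rewrite normr_gt0.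
rewrite subrr powRr0 !mul1r in H.
have -> : a^-1 = `|a|^-1 * Num.sg a.
  by rewrite {1}(numEsg a) invfM invr_sg mulrC.
apply: near_eq_is_derive H; near=> h => /=; rewrite powRr1 //.
Unshelve. all: by end_near. Qed.

Lemma row_shift (R : realType) (n : nat) (x : 'rV[R]_n) k (h : R) (j : 'I_n) :
  (h *: delta_mx 0 k + x) 0 j = (if j == k then h + x 0 k else x 0 j).
Proof.
rewrite !mxE eqxx /=; have [->|jk] := eqVneq j k; first by rewrite mulr1n mulr1.
by rewrite mulr0n mulr0 add0r.
Qed.

Lemma partial_Mreg (R : realType) (q : R) (L n : nat) (x : 'rV[R]_n) k :
  (0 < L)%N -> x 0 k != 0 ->
  partial (@Mreg R q L n) x 0 k = x 0 k / `|x 0 k| `^ mexp q L.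
Proof.
move=> L0 xk; rewrite /partial derive_line.
have L0' : (L%:R : R) != 0 by rewrite pnatr_eq0 -lt0n.
have ax0 : `|x 0 k| != 0 by rewrite normr_eq0.
set m := mexp q L.
set K1 := \sum_(j < n | j != k) `|x 0 j| `^ (2 - m).
set K2 := \sum_(j < n | j != k) ln `|x 0 j|.
have [m2|m2] := eqVneq m 2.
  have E : (fun h : R => @Mreg R q L n (h *: delta_mx 0 k + x)) =
           (fun h : R => ln `|h + x 0 k| + K2).
    apply: funext => h; rewrite /Mreg -/m m2 eqxx /=.
    rewrite (bigD1 k) //= row_shift eqxx; congr (_ + _).
    by apply: eq_bigr => j jk; rewrite row_shift (negbTE jk).
  rewrite E.
  have H : is_derive (0:R) 1 ((fun h : R => ln `|h + x 0 k|) \+ cst K2) ((x 0 k)^-1 + 0).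
    by apply: is_deriveD; exact: is_derive_shift_lnabs.
  have [_ ->] := H.
  rewrite addr0 m2 powR_mulrn ?normr_ge0 // real_normK ?num_real //.
  by rewrite expr2 invfM mulrA mulfV // mul1r.
have E : (fun h : R => @Mreg R q L n (h *: delta_mx 0 k + x)) =
         (fun h : R => (L%:R / (L%:R * (2 - q) + q)) * (`|h + x 0 k| `^ (2 - m) + K1)).
  apply: funext => h; rewrite /Mreg -/m m2 /=; congr (_ * _).
  rewrite (bigD1 k) //= row_shift eqxx; congr (_ + _).
  by apply: eq_bigr => j jk; rewrite row_shift (negbTE jk).
rewrite E.
set C := L%:R / (L%:R * (2 - q) + q).
have H : is_derive (0:R) 1 (C \*: ((fun h : R => `|h + x 0 k| `^ (2 - m)) \+ cst K1))
   (C *: ((2 - m) * `|x 0 k| `^ (2 - m - 1) * Num.sg (x 0 k) + 0)).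
  by apply: is_deriveZ; apply: is_deriveD; exact: is_derive_shift_abspow.
have [_ ->] := H.
have D0 : L%:R * (2 - q) + q != 0.
  apply: contra m2 => /eqP D0; apply/eqP; rewrite /m /mexp.
  have -> : q * (L%:R - 1) = L%:R * 2 - (L%:R * (2 - q) + q) by ring.
  by rewrite D0 subr0 mulrAC mulfV // mul1r.
have HC : C * (2 - m) = 1.
  by rewrite /C /m /mexp; field; rewrite D0 L0'.
have -> : 2 - m - 1 = 1 + - m by ring.
rewrite powRD ?ax0 ?implybT // powRr1 ?normr_ge0 // powRN addr0.
change (C * ((2 - m) * (`|x 0 k| / `|x 0 k| `^ m) * Num.sg (x 0 k)) = x 0 k / `|x 0 k| `^ m).
transitivity ((C * (2 - m)) * (Num.sg (x 0 k) * `|x 0 k|) / `|x 0 k| `^ m); first by ring.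
by rewrite HC mul1r mulr_sg_norm.
Qed.

Lemma nbhs_eps (R : realType) (f : R -> R) s : f x @[x --> s] --> f s ->
  forall e, 0 < e -> exists2 d, 0 < d & forall y, `|s - y| < d -> `|f s - f y| < e.
Proof.
move/cvgrPdist_lt => H e e0; have := H e e0.
move=> /nbhs_ballP [d /= d0 Hd]; exists d => // y sy.

Qed.

Lemma right_eps (R : realType) (f : R -> R) s : f x @[x --> s^'+] --> f s ->
  forall e, 0 < e -> exists2 d, 0 < d & forall h, 0 < h < d -> `|f s - f (s + h)| < e.
Proof.
move/cvgrPdist_lt => H e e0; have := H e e0.
move=> /nbhs_ballP [d /= d0 Hd]; exists d => // h /andP[h0 hd].
apply: Hd; last by rewrite ltrDl.
by rewrite /ball /= opprD addrA subrr add0r normrN gtr0_norm.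
Qed.



Lemma cont_abspow (R : realType) (q : R) : 1 <= q -> continuous (fun z : R => `|z| `^ q).
Proof.
move=> q1 z; have [->|z0] := eqVneq z 0.
  apply/cvgrPdist_lt => e e0.
  have q0 : q != 0 by apply/negP => /eqP q0; rewrite q0 in q1; lra.
  have m0 : 0 < Num.min e 1 by rewrite lt_min e0 ltr01.
  near=> y; rewrite normr0 powR0 // sub0r normrN ger0_norm ?powR_ge0 //.
  have : `|y| < Num.min e 1 by near: y; exists (Num.min e 1) => //= y; rewrite /ball /= sub0r normrN.
  rewrite lt_min => /andP[ye y1].
  have [->|y0] := eqVneq y 0; first by rewrite normr0 powR0.
  apply: le_lt_trans ye; apply: ge1r_powR => //.
  by rewrite normr_gt0 y0 ltW.
have := @is_derive_abspow R q z z0 => -[/derivable1_diffP /differentiable_continuous] //.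
Unshelve. all: by end_near. Qed.

Lemma phi_cvg (R : realType) (q : R) (F : set_system R) {FF : Filter F} (a b : R -> R) s :
  1 <= q -> a @ F --> a s -> b @ F --> b s -> (fun r => r) @ F --> s ->
  (fun r => expR (q * r) * (`|a r| `^ q - `|b r| `^ q)) @ F -->
     expR (q * s) * (`|a s| `^ q - `|b s| `^ q).
Proof.
move=> q1 ha hb hs.
apply: cvgM.
  have h1 : (fun r => q * r) @ F --> q * s by apply: cvgMr.
  exact: (@continuous_cvg _ _ _ F FF (fun r => q * r) expR (q * s) (@continuous_expR R _) h1).
apply: cvgB.
  have := (@continuous_cvg _ _ _ F FF a (fun z : R => `|z| `^ q) (a s) (@cont_abspow R q q1 _) ha).
  exact.
exact: (@continuous_cvg _ _ _ F FF b (fun z => `|z| `^ q) (b s) (@cont_abspow R q q1 _) hb).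
Qed.


Lemma dc (R : realType) (q : R) (L : nat) (u : 'I_L -> R -> R) (g : R -> R) l r :
  0 < q -> u l r != 0 ->
  is_derive r 1 (u l) (- sgpow q (g r * \prod_(m < L | m != l) u m r) - u l r) ->
  is_derive r 1 (fun s => expR (q * s) * `|u l s| `^ q)
     (- q * expR (q * r) * sgpow q (g r * \prod_(m < L) u m r)).
Proof.
move=> q0 ul du.
have H1 : is_derive r 1 (expR \o (q \*: (@id R))) (expR (q *: r) * (q *: 1)).
  by apply: is_derive1_comp.
have H2 := @is_derive1_comp R (fun z : R => `|z| `^ q) (u l) r _ _
   (@is_derive_abspow R q (u l r) ul) du.
have H := is_deriveM H1 H2.
apply: is_derive_eq H _.
have sc : forall a b : R, a *: b = a * b by [].
rewrite !sc [in RHS](bigD1 l) //= mulr1.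
set P := \prod_(m < L | m != l) u m r.
set E := expR (q * r).
rewrite /sgpow.
rewrite !sgrM !normrM !powRM ?normr_ge0 ?mulr_ge0 //.
rewrite -(@mulr_powRB1 _ `|u l r| q) ?normr_ge0 //.
set A := `|u l r| `^ (q - 1).
rewrite [X in X * A * (E * q)]normrEsg.
ring.
Qed.


Lemma deriv0_eps (R : realType) (F : R -> R) (s : R) : is_derive s (1:R) F 0 ->
  forall e, 0 < e -> exists2 d, 0 < d & forall h, 0 < h < d -> F (s + h) <= F s + e * h.
Proof.
move=> [df dv] e e0.
have H := df.
rewrite /derivable -/(derive F s 1) dv in H.
move/cvgrPdist_lt : H => /(_ e e0) /nbhs_ballP [d /= d0 Hd].
exists d => // h /andP[h0 hd].
have := Hd h; rewrite /ball /= sub0r normrN gtr0_norm // => /(_ hd).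
rewrite gt_eqF // => /(_ isT).
rewrite sub0r normrN /= /shift [h *: 1]mulr1 addrC.
move=> /ltr_normlW.
rewrite [_ *: _]/= ltr_pdivrMl // => H.
rewrite (addrC s h); lra.
Qed.



Lemma balance (R : realType) (q T : R) (L : nat) (u : 'I_L -> R -> R) (g : R -> R) :
  1 <= q ->
  (forall i, u i x @[x --> 0^'+] --> u i 0) ->
  (forall t, 0 < t < T -> forall i, is_derive t 1 (u i)
       (- sgpow q (g t * \prod_(j < L | j != i) u j t) - u i t)) ->
  (forall i j, `|u i 0| `^ q = `|u j 0| `^ q) ->
  forall t, 0 < t < T -> forall i j, `|u i t| = `|u j t|.
Proof.
move=> q1 H0 Hd Hb t /andP[t0 tT].
have q0 : 0 < q by lra.
have qn0 : q != 0 by rewrite gt_eqF.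
have contu : forall i s, 0 < s < T -> u i x @[x --> s] --> u i s.
  move=> i s sT; have [/derivable1_diffP/differentiable_continuous + _] := Hd s sT i.
  by [].
pose phi i j s := expR (q * s) * (`|u i s| `^ q - `|u j s| `^ q).
have phic : forall i j s, 0 < s < T -> phi i j x @[x --> s] --> phi i j s.
  move=> i j s sT; apply: (@phi_cvg R q (nbhs s) _ (u i) (u j) s) => //; exact: contu.
have key : forall i j, phi i j t <= 0.
  move=> i j; apply: (@dini R 0 t) => //.
  - by rewrite /phi (Hb i j) subrr mulr0.
  - move=> s /andP[s0 st] e e0.
    have C : phi i j x @[x --> s^'+] --> phi i j s.
      have [->|sn0] := eqVneq s 0.
        apply: (@phi_cvg R q (0^'+) _ (u i) (u j) 0) => //; apply: cvg_at_right_filter; exact: cvg_id.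
      apply: cvg_at_right_filter; apply: phic.
      by rewrite lt_neqAle eq_sym sn0 s0 /=; lra.
    have [d d0 Hd'] := @right_eps R (phi i j) s C e e0; exists d => // h hh.
    by have := Hd' h hh; rewrite ltr_distlC => /andP[_ ->].
  - move=> s /andP[s0 st] e e0.
    have [d d0 Hd'] := @nbhs_eps R (phi i j) s (phic i j s ltac:(apply/andP; split; lra)) e e0.
    exists d => // h /andP[h0 hd].
    have := Hd' (s - h); rewrite opprB addrC subrK gtr0_norm // => /(_ hd).
    by rewrite ltr_distlC => /andP[-> _].
  - move=> s /andP[s0 st] ps e e0.
    have sT : 0 < s < T by apply/andP; split; lra.
    have ui : u i s != 0.
      apply/eqP => ui; move: ps; rewrite /phi ui normr0 powR0 // sub0r.
      rewrite pmulr_rgt0 ?expR_gt0 // oppr_gt0 => H; have := powR_ge0 `|u j s| q; lra.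
    have dci := @dc R q L u g i s q0 ui (Hd s sT i).
    have [uj|uj] := eqVneq (u j s) 0; last first.
      have dcj := @dc R q L u g j s q0 uj (Hd s sT j).
      have E : phi i j = (fun s => expR (q * s) * `|u i s| `^ q) \- (fun s => expR (q * s) * `|u j s| `^ q).
        by apply: funext => r; rewrite /phi /= mulrBr.
      have D0 : is_derive s 1 (phi i j) 0.
        by rewrite E; apply: is_derive_eq (is_deriveB dci dcj) _; rewrite subrr.
      exact: deriv0_eps D0 e e0.
    have P0 : \prod_(m < L) u m s = 0 by rewrite (bigD1 j) //= uj mul0r.
    rewrite P0 mulr0 /sgpow sgr0 mul0r mulr0 in dci.
    have [d d0 Hd'] := @deriv0_eps R _ s dci e e0.
    exists d => // h hh; have := Hd' h hh.
    rewrite /phi uj normr0 powR0 // subr0 => H.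
    apply: le_trans H; rewrite mulrBr lerBlDr lerDl.
    by rewrite mulr_ge0 ?powR_ge0 // ltW // expR_gt0.
move=> i j; have [ai bj] := (key i j, key j i).
rewrite /phi in ai bj.
have Ep : 0 < expR (q * t) by rewrite expR_gt0.
rewrite pmulr_rle0 // subr_le0 in ai.
rewrite pmulr_rle0 // subr_le0 in bj.
apply: (powR_injective q0); rewrite ?nnegrE ?normr_ge0 //.
by apply/eqP; rewrite eq_le ai bj.
Qed.

Lemma is_derive_prod_seq (R : realType) (I : Type) (r : seq I) (F : I -> R -> R) (dF : I -> R) (t : R) :
  (forall i, is_derive t 1 (F i) (dF i)) -> (forall i, F i t != 0) ->
  is_derive t 1 (fun s => \prod_(i <- r) F i s)
     (\sum_(i <- r) (\prod_(j <- r) F j t) * (dF i / F i t)).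
Proof.
move=> Hd Hn; elim: r => [|a r IH].
  have -> : (fun s => \prod_(i <- [::]) F i s) = cst 1.
    by apply: funext => s; rewrite big_nil.
  by rewrite !big_nil; apply: is_derive_cst.
have -> : (fun s => \prod_(i <- a :: r) F i s) = F a * (fun s => \prod_(i <- r) F i s).
  by apply: funext => s; rewrite big_cons.
apply: is_derive_eq (is_deriveM (Hd a) IH) _.
rewrite big_cons big_cons /=.
set P := \prod_(j <- r) F j t.
have sc : forall a b : R, a *: b = a * b by [].
rewrite !sc mulr_sumr addrC; congr (_ + _).
  by field; exact: Hn.
by apply: eq_bigr => i _; rewrite mulrA.
Qed.
Theorem theorem4 (R : realType) (n L : nat) (q T : R)
  (f : 'rV[R]_n -> R) (w : R -> 'M[R]_(L, n)) (Rs : 'I_n -> R -> R) :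
  1 <= q -> (2 <= L)%N -> C1 f -> 0 < T ->
  (* w solves the flow on [0, T) *)
  (forall i k, (fun s => w s i k) @ 0^'+ --> w 0 i k) ->
  (forall t, 0 < t < T -> forall i k,
     is_derive t 1 (fun s => w s i k)
       (- sgpow q (partial (Fw f) (w t) i k) - w t i k)) ->
  (* balanced initialization *)
  (forall i j k, `|w 0 i k| `^ q = `|w 0 j k| `^ q) ->
  (* R separable, R(x) = sum_k Rs k x_k, with Hessian diag(1/(L |x_k|^m)) *)
  (forall (k : 'I_n) (s : R), s != 0 -> derivable (Rs k) s 1) ->
  (forall (k : 'I_n) (s : R), s != 0 ->
     is_derive s 1 (derive1 (Rs k)) (1 / (L%:R * `|s| `^ mexp q L))) ->
  forall t : R, 0 < t < T -> forall k : 'I_n, (prodw (w t)) 0 k != 0 ->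
    is_derive t 1 (fun s => (derive1 (Rs k)) ((prodw (w s)) 0 k))
      (- sgpow q (partial f (prodw (w t)) 0 k)
       - partial (@Mreg R q L n) (prodw (w t)) 0 k).
Proof.
move=> q1 L2 [fd _] T0 H0 Hd Hb RsD RsH t tT k xk.
have L0 : (0 < L)%N by apply: leq_trans L2.
have q0 : 0 < q by apply: lt_le_trans q1; exact: ltr01.
pose u := fun (i : 'I_L) (s : R) => w s i k.
pose g := fun s : R => partial f (prodw (w s)) 0 k.
have Hd' : forall s, 0 < s < T -> forall i, is_derive s 1 (u i)
    (- sgpow q (g s * \prod_(j < L | j != i) u j s) - u i s).
  by move=> s sT i; rewrite /g /u -partial_Fw //; exact: Hd.
have bal := @balance R q T L u g q1 (fun i => H0 i k) Hd' (fun i j => Hb i j k) t tT.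
have XE : forall s, prodw (w s) 0 k = \prod_(i < L) u i s.
  by move=> s; rewrite /prodw mxE.
have un : forall i, u i t != 0.
  move=> i; rewrite XE in xk; apply: contra xk => /eqP ui.
  by rewrite (bigD1 i) //= ui mul0r.
pose du i := - sgpow q (g t * \prod_(j < L | j != i) u j t) - u i t.
have HX := @is_derive_prod_seq R _ (index_enum 'I_L) u du t (fun i => Hd' t tT i) un.
have -> : (fun s => derive1 (Rs k) (prodw (w s) 0 k)) =
          derive1 (Rs k) \o (fun s => \prod_(i < L) u i s).
  by apply: funext => s; rewrite /= XE.
have HR := RsH k _ xk.
rewrite XE in HR.
apply: is_derive_eq (is_derive1_comp HR HX) _.
rewrite partial_Mreg // XE -/(g t).
set X := \prod_(i < L) u i t.
pose i0 : 'I_L := Ordinal L0.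
set a := `|u i0 t|.
have ua : forall i, `|u i t| = a by move=> i; exact: bal.
have a0 : 0 < a by rewrite /a normr_gt0 un.
have aX : `|X| = a ^+ L.
  rewrite /X normr_prod (eq_bigr (fun _ => a)) => [|i _]; last exact: ua.
  by rewrite prodr_const card_ord.
have aP : forall i, `|\prod_(j < L | j != i) u j t| = a ^+ L.-1.
  move=> i; rewrite normr_prod (eq_bigr (fun _ => a)) => [|j _]; last exact: ua.
  by rewrite prodr_const cardC1 card_ord.
set m := mexp q L.
have LE : (L%:R : R) = (L.-1)%:R + 1 by rewrite natr1 prednK.
have L0' : (L%:R : R) != 0 by rewrite pnatr_eq0 -lt0n.
have Ym : (a ^+ L) `^ m = (a ^+ L.-1) `^ q.
  rewrite -!powR_mulrn ?ltW // -!powRrM; congr (a `^ _).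
  rewrite /m /mexp; move: L0'; rewrite LE => L0''.
  by field.
set Y := `|X| `^ m.
have Yp : 0 < Y by rewrite /Y powR_gt0 // normr_gt0 -/X; rewrite XE in xk.
have summand : forall i, X * (du i / u i t) = - sgpow q (g t) * Y - X.
  move=> i.
  have XP : X = u i t * \prod_(j < L | j != i) u j t by rewrite /X (bigD1 i).
  set P := \prod_(j < L | j != i) u j t.
  have PY : `|P| `^ q = Y by rewrite /Y aX aP -/m Ym.
  rewrite /du -/P.
  transitivity (- (P * sgpow q (g t * P)) - X).
    by rewrite XP -/P; field; exact: un i.
  congr (_ - _).
  rewrite /sgpow sgrM normrM powRM ?normr_ge0 // -PY.
  rewrite -(@mulr_powRB1 _ `|P| q) ?normr_ge0 //.
  set B := `|P| `^ (q - 1).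
  rewrite [X in _ = _ * (X * B)]normrEsg.
  ring.
rewrite (eq_bigr _ (fun i _ => summand i)) sumr_const card_ord -mulr_natl.
by field; rewrite L0' gt_eqF.
Qed.
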